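(* Let $\gamma>0$, $\rho<0$, $C>0$, and let $F$ be a distribution function whose tail quantile function $Q(t)=F^{\leftarrow}(1-1/t)$ satisfies the von Mises condition: there are $A>0$, $t_0>0$ and a function $b$ with $Q(t)=A t^{\gamma}\exp\int_{t_0}^t \frac{b(u)}{u}\,du$ for $t\ge t_0$, and $\bar b(t):=\sup_{x\ge t}|b(x)|\le C t^{\rho}$ for all $t>0$. For integers $k\ge1$ and $\delta\in(0,1)$ define $V(k,\delta)$ as the $(1-\delta/2)$-quantile of $|Z_k-1|$ where $Z_k\sim\mathrm{Gamma}(\text{shape }k,\text{ rate }k)$, $\tilde V(k,\delta)=\sqrt{2\log(2/\delta)/k}+\log(2/\delta)/k$, $R(k,\delta)=\sqrt{3\log(1/\delta)/k}+3\log(1/\delta)/k$, and $$B(k,n,\delta)=\bigl(1+\tilde V(1,\delta/2)\bigr)\,\bar b\Bigl(\frac{n}{(k+1)\bigl(1+R(1,\delta/2)\bigr)}\Bigr).$$ Let $c_1\in(0,1]$ and $c_2\in(0,2]$ be constants such that $V(k,\delta)\ge c_1\bigl(\sqrt{(0\vee\log(c_2/\delta))/k}+\log(c_2/\delta)/k\bigr)$ for all $k\ge1$, $\delta\in(0,1)$. Let $n\ge1$, let $\mathcal K=\{k_1<k_2<\dots<k_M\}\subset\{1,\dots,n\}$, and let $\delta\in(0,1)$ with $\delta\le c_2^2/4$. Assume (i) $B(k_1,n,\delta)\le\gamma V(k_1,\delta)$ and $B(k_M,n,\delta)>\gamma V(k_M,\delta)$; (ii) there is $\beta>1$ with $k_{m+1}/k_m\le\beta$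 for all $m<M$. Define $k^*(\delta,n)=\max\{k\in\mathcal K: B(k,n,\delta)\le\gamma V(k,\delta)\}$ and $$C_2(\rho)=\Bigl(\frac{4}{21}\Bigr)^2\Bigl(\frac{c_1}{\sqrt2\,C}\Bigr)^{2/(1-2\rho)}.$$ Then, provided $n$ is large enough that $n/2\ge \beta^{-1}\Bigl(\frac{C_2(\rho)\gamma^{2/(1-2\rho)}}{\log(4/\delta)}n^{-2\rho/(1-2\rho)}-1\Bigr)$, $$k^*(\delta,n)\ge\beta^{-1}\Bigl(\frac{C_2(\rho)\,\gamma^{2/(1-2\rho)}}{\log(4/\delta)}\,n^{-2\rho/(1-2\rho)}-1\Bigr).$$
   Context: Here $F^{\leftarrow}$ denotes the generalized inverse of $F$. The functions $V$ and $B$ are the variance and bias terms of a non-asymptotic error bound for the Hill estimator $\hat\gamma(k)=\frac1k\sum_{i=1}^k\log(X_{(i)}/X_{(k+1)})$ (with $X_{(1)}\ge\dots\ge X_{(n)}$ the order statistics of an i.i.d. sample from $F$), specialized to the von Mises setting; $k^*(\delta,n)$ is the corresponding ''oracle'' extreme sample size on the grid $\mathcal K$. Assumption (i) is the ''sufficiently wide grid'' condition and (ii) the ''fine enough grid'' condition. *)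

(* Defs.v *)
From Stdlib Require Import Reals Lra List.
From Coquelicot Require Import Coquelicot.
Open Scope R_scope.

Definition is_distribution_function (F : R -> R) : Prop :=
  (forall x y, x <= y -> F x <= F y) /\
  (forall x, filterlim F (at_right x) (locally (F x))) /\
  is_lim F m_infty 0 /\ is_lim F p_infty 1.

Definition geninv (F : R -> R) (p : R) : R :=
  real (Glb_Rbar (fun x => p <= F x)).

Definition tailQ (F : R -> R) (t : R) : R := geninv F (1 - / t).

Definition absb_tail (b : R -> R) (t : R) : R -> Prop :=
  fun y => exists x, t <= x /\ y = Rabs (b x).

Definition bbar (b : R -> R) (t : R) : R := real (Lub_Rbar (absb_tail b t)).

Definition gamma_pdf (k : nat) (z : R) : R :=
  if Rle_dec z 0 then 0
  else (INR k) ^ k * z ^ (k - 1) * exp (- INR k * z) / INR (Factorial.fact (k - 1)).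

Definition absdev_cdf (k : nat) (x : R) : R :=
  if Rlt_dec x 0 then 0 else RInt (gamma_pdf k) (1 - x) (1 + x).

Definition Vq (k : nat) (delta : R) : R :=
  real (Glb_Rbar (fun x => 1 - delta / 2 <= absdev_cdf k x)).

Definition Vtilde (k : nat) (delta : R) : R :=
  sqrt (2 * ln (2 / delta) / INR k) + ln (2 / delta) / INR k.

Definition Rfun (k : nat) (delta : R) : R :=
  sqrt (3 * ln (1 / delta) / INR k) + 3 * ln (1 / delta) / INR k.

Definition Bbias (b : R -> R) (k n : nat) (delta : R) : R :=
  (1 + Vtilde 1 (delta / 2)) *
  bbar b (INR n / (INR (k + 1) * (1 + Rfun 1 (delta / 2)))).

(* k*(delta, n) = max { k in K | B(k,n,delta) <= gamma V(k,delta) },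
   where K = { kg 0 < ... < kg (M-1) } *)
Definition kstar (b : R -> R) (gamma : R) (kg : nat -> nat) (M n : nat)
    (delta : R) : nat :=
  list_max (map kg (filter
    (fun m => if Rle_dec (Bbias b (kg m) n delta) (gamma * Vq (kg m) delta)
              then true else false) (seq 0 M))).

Definition C2const (c1 C rho : R) : R :=
  (4 / 21) ^ 2 * Rpower (c1 / (sqrt 2 * C)) (2 / (1 - 2 * rho)).

(* Main.v *)
Require Import Defs.
From Stdlib Require Import Reals Lra List Lia.
From Coquelicot Require Import Coquelicot.
Open Scope R_scope.

Lemma ln_sqrt' x : 0 < x -> ln (sqrt x) = ln x / 2.
Proof.
  intros Hx. assert (Hs : 0 < sqrt x) by (apply sqrt_lt_R0; lra).
  rewrite <- (sqrt_sqrt x) at 2 by lra. rewrite ln_mult by lra. field.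
Qed.

Lemma ln_le_inv x y : 0 < x -> 0 < y -> ln x <= ln y -> x <= y.
Proof.
  intros Hx Hy H. destruct (Rle_lt_dec x y) as [h|h]; auto.
  pose proof (ln_increasing y x Hy h). lra.
Qed.

Lemma sqrt_le_half z : 0 <= z -> sqrt z <= (z + 1) / 2.
Proof.
  intros Hz. pose proof (sqrt_sqrt z Hz). pose proof (sqrt_pos z).
  pose proof (Rle_0_sqr (sqrt z - 1)). unfold Rsqr in *. nra.
Qed.

Lemma ln_Rpower x y : 0 < x -> ln (Rpower x y) = y * ln x.
Proof. intros. unfold Rpower. apply ln_exp. Qed.

Lemma Rpower_pos' x y : 0 < Rpower x y.
Proof. unfold Rpower. apply exp_pos. Qed.

Lemma bbar_bound (b : R -> R) C rho :
  (forall t, 0 < t -> Rbar_le (Lub_Rbar (absb_tail b t)) (C * Rpower t rho)) ->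
  0 < C -> forall t, 0 < t -> bbar b t <= C * Rpower t rho.
Proof.
  intros H HC t Ht. specialize (H t Ht). unfold bbar.
  pose proof (Rpower_pos' t rho).
  destruct (Lub_Rbar (absb_tail b t)); simpl in *; try contradiction; nra.
Qed.

Lemma kstar_ge b gamma kg M n delta m :
  (m < M)%nat -> Bbias b (kg m) n delta <= gamma * Vq (kg m) delta ->
  (kg m <= kstar b gamma kg M n delta)%nat.
Proof.
  intros Hm Hs. unfold kstar.
  set (l := map _ _).
  assert (Hf := proj1 (list_max_le l (list_max l)) (le_n _)).
  rewrite Forall_forall in Hf. apply Hf. unfold l. apply in_map.
  apply filter_In. split.
  - apply in_seq. lia.
  - destruct Rle_dec; [reflexivity| contradiction].
Qed.

Lemma exp_le' x y : x <= y -> exp x <= exp y.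
Proof. intros [h|h]; [left; apply exp_increasing; auto | subst; lra]. Qed.

Ltac pos := repeat (first [apply Rmult_lt_0_compat | apply Rdiv_lt_0_compat | apply Rinv_0_lt_compat | apply Rpower_pos' | apply sqrt_lt_R0 | apply exp_pos | apply pow_lt]); try lra.

Lemma sat_small (gamma rho C : R) (b : R -> R) (c1 c2 : R) (n k : nat) (delta : R) :
  0 < gamma -> rho < 0 -> 0 < C ->
  (forall t, 0 < t -> Rbar_le (Lub_Rbar (absb_tail b t)) (C * Rpower t rho)) ->
  0 < c1 -> 0 < c2 ->
  (forall (k : nat) (d : R), (1 <= k)%nat -> 0 < d < 1 ->
     c1 * (sqrt (Rmax 0 (ln (c2 / d)) / INR k) + ln (c2 / d) / INR k)
       <= Vq k d) ->
  (1 <= n)%nat -> 0 < delta < 1 -> delta <= c2 ^ 2 / 4 -> (1 <= k)%nat ->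
  INR k + 1 <= C2const c1 C rho * Rpower gamma (2 / (1 - 2 * rho)) / ln (4 / delta)
        * Rpower (INR n) (- 2 * rho / (1 - 2 * rho)) ->
  Bbias b k n delta <= gamma * Vq k delta.
Proof.
  intros Hg Hr HC Hb Hc1 Hc2 HV Hn Hd Hdc Hk HX.
  set (p := ln 2). set (v := - ln delta).
  assert (Hp : / 2 < p) by apply ln_lt_2.
  assert (Hv : 0 < v). { unfold v. pose proof (ln_increasing delta 1 ltac:(lra) ltac:(lra)) as H1. rewrite ln_1 in H1. lra. }
  set (l := ln (4 / delta)).
  assert (Hl : l = 2 * p + v).
  { unfold l, v, p. rewrite ln_div by lra. replace 4 with (2*2) by ring. rewrite ln_mult by lra. ring. }
  assert (Hl2 : ln (2 / delta) = p + v).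
  { unfold v, p. rewrite ln_div by lra. ring. }
  set (L := ln (c2 / delta)).
  assert (HL : l / 2 <= L).
  { assert (H2 : 2 * ln c2 >= 2 * p - v).
    { replace (2 * ln c2) with (ln (c2 ^ 2)) by (rewrite ln_pow by lra; simpl; ring).
      unfold p, v. replace (2 * ln 2 - - ln delta) with (ln (4 * delta)).
      - apply Rle_ge, ln_le; lra.
      - replace 4 with (2*2) by ring. rewrite !ln_mult by lra. ring. }
    unfold L. rewrite ln_div by lra. assert (v = - ln delta) by reflexivity. rewrite Hl. lra. }
  set (K := INR k + 1).
  assert (HkR : 1 <= INR k) by (apply (le_INR 1); auto).
  assert (HK : 0 < K) by (unfold K; lra).
  assert (HnR : 1 <= INR n) by (apply (le_INR 1); auto).
  set (W := 21 / 4 * l).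
  assert (HW : 0 < W) by (unfold W; lra).
  assert (HVt : 0 <= 1 + Vtilde 1 (delta / 2) <= W).
  { unfold Vtilde. replace (2 / (delta / 2)) with (4 / delta) by (field; lra). fold l.
    change (INR 1) with 1. replace (2 * l / 1) with (2 * l) by field. replace (l / 1) with l by field.
    pose proof (sqrt_le_half (2 * l) ltac:(lra)). pose proof (sqrt_pos (2 * l)). unfold W. lra. }
  assert (HRf : 0 < 1 + Rfun 1 (delta / 2) <= W).
  { unfold Rfun. replace (1 / (delta / 2)) with (2 / delta) by (field; lra). rewrite Hl2.
    change (INR 1) with 1. replace (3 * (p + v) / 1) with (3 * (p + v)) by field.
    pose proof (sqrt_le_half (3 * (p + v)) ltac:(lra)). pose proof (sqrt_pos (3 * (p + v))). unfold W. lra. }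
  set (t := INR n / (INR (k + 1) * (1 + Rfun 1 (delta / 2)))).
  assert (HK' : INR (k + 1) = K) by (unfold K; rewrite plus_INR; simpl; ring).
  set (t' := INR n / (K * W)).
  assert (Ht' : 0 < t') by (unfold t'; apply Rdiv_lt_0_compat; nra).
  assert (Htt : t' <= t).
  { unfold t, t'. rewrite HK'. unfold Rdiv. apply Rmult_le_compat_l; [lra|].
    apply Rinv_le_contravar; nra. }
  assert (Hpow : Rpower t rho <= Rpower t' rho).
  { unfold Rpower. apply exp_le'. pose proof (ln_le t' t Ht' Htt). nra. }
  assert (Hbb : bbar b t <= C * Rpower t' rho).
  { pose proof (bbar_bound b C rho Hb HC t ltac:(lra)). nra. }
  assert (HB : Bbias b k n delta <= W * (C * Rpower t' rho)).
  { unfold Bbias. fold t. apply Rle_trans with ((1 + Vtilde 1 (delta / 2)) * (C * Rpower t' rho)).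
    - apply Rmult_le_compat_l; lra.
    - pose proof (Rpower_pos' t' rho). apply Rmult_le_compat_r; nra. }
  assert (HVq : c1 * sqrt (l / (2 * K)) <= Vq k delta).
  { specialize (HV k delta Hk Hd). fold L in HV.
    rewrite Rmax_right in HV by lra.
    assert (0 <= L / INR k) by (apply Rdiv_le_0_compat; lra).
    assert (sqrt (l / (2 * K)) <= sqrt (L / INR k)).
    { apply sqrt_le_1_alt. apply Rle_trans with (L / K).
      - unfold Rdiv. rewrite Rinv_mult. assert (0 < / K) by (apply Rinv_0_lt_compat; lra). nra.
      - unfold Rdiv. apply Rmult_le_compat_l; [lra|]. apply Rinv_le_contravar; unfold K; lra. }
    nra. }
  apply Rle_trans with (W * (C * Rpower t' rho)); [exact HB|].
  apply Rle_trans with (gamma * (c1 * sqrt (l / (2 * K)))); [| nra].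
  assert (Hl0 : 0 < l) by lra.
  assert (Hsq : 0 < sqrt (l / (2 * K))) by (apply sqrt_lt_R0; apply Rdiv_lt_0_compat; lra).
  apply ln_le_inv.
  - pose proof (Rpower_pos' t' rho). repeat apply Rmult_lt_0_compat; lra.
  - repeat apply Rmult_lt_0_compat; lra.
  - assert (HnR0 : 0 < INR n) by lra.
    set (a := 2 / (1 - 2 * rho)). set (q := - 2 * rho / (1 - 2 * rho)).
    set (w0 := ln (21/4)).
    assert (Hw0 : 0 < w0).
    { unfold w0. rewrite <- ln_1. apply ln_increasing; lra. }
    assert (E1 : ln (W * (C * Rpower t' rho)) =
                 w0 + ln l + ln C + rho * (ln (INR n) - (ln K + (w0 + ln l)))).
    { rewrite ln_mult by pos. rewrite ln_mult by pos. rewrite ln_Rpower by pos.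
      unfold t'. rewrite ln_div by pos. rewrite ln_mult by pos. unfold W.
      rewrite ln_mult by pos. fold w0. ring. }
    assert (E2 : ln (gamma * (c1 * sqrt (l / (2 * K)))) =
                 ln gamma + (ln c1 + (ln l - (p + ln K)) / 2)).
    { rewrite ln_mult by pos. rewrite ln_mult by pos. rewrite ln_sqrt' by pos.
      rewrite ln_div by pos. rewrite ln_mult by pos. fold p. ring. }
    rewrite E1, E2.
    fold K in HX. fold l in HX. fold a in HX. fold q in HX.
    unfold C2const in HX. fold a in HX.
    assert (HXl := ln_le _ _ HK HX).
    assert (E3 : ln ((4 / 21) ^ 2 * Rpower (c1 / (sqrt 2 * C)) a * Rpower gamma a / l *
       Rpower (INR n) q) = 2 * (- w0) + a * (ln c1 - (p / 2 + ln C)) + a * ln gamma - ln l + q * ln (INR n)).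
    { rewrite ln_mult by pos. rewrite ln_div by pos. rewrite ln_mult by pos.
      rewrite ln_mult by pos. rewrite ln_pow by pos.
      rewrite (ln_Rpower (c1 / _)) by pos. rewrite (ln_Rpower gamma) by pos.
      rewrite (ln_Rpower (INR n)) by pos.
      replace (4/21) with (/ (21/4)) by field.
      rewrite (ln_div c1) by pos. rewrite (ln_mult (sqrt 2)) by pos.
      rewrite ln_sqrt' by pos. rewrite ln_Rinv by pos. fold w0. fold p.
      simpl INR. ring. }
    rewrite E3 in HXl.
    set (sr := 1/2 - rho).
    assert (Hsr : 0 < sr) by (unfold sr; lra).
    assert (H1 : sr * ln K <= sr * (2 * (- w0) + a * (ln c1 - (p / 2 + ln C)) + a * ln gamma - ln l + q * ln (INR n))).
    { apply Rmult_le_compat_l; lra. }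
    assert (H2 : sr * (2 * (- w0) + a * (ln c1 - (p / 2 + ln C)) + a * ln gamma - ln l + q * ln (INR n))
                 = -2 * sr * w0 + ln c1 - p/2 - ln C + ln gamma - sr * ln l - rho * ln (INR n)).
    { unfold sr, a, q. field. lra. }
    assert (H3 : rho * w0 <= 0) by nra.
    unfold sr in *. lra.
Qed.

Theorem proposition4
  (gamma rho C : R) (F : R -> R) (A t0 : R) (b : R -> R)
  (c1 c2 : R) (n M : nat) (kg : nat -> nat) (delta beta : R) :
  0 < gamma -> rho < 0 -> 0 < C ->
  is_distribution_function F ->
  0 < A -> 0 < t0 ->
  (forall t, t0 <= t ->
     ex_RInt (fun u => b u / u) t0 t /\
     tailQ F t = A * Rpower t gamma * exp (RInt (fun u => b u / u) t0 t)) ->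
  (forall t, 0 < t -> Rbar_le (Lub_Rbar (absb_tail b t)) (C * Rpower t rho)) ->
  0 < c1 <= 1 -> 0 < c2 <= 2 ->
  (forall (k : nat) (d : R), (1 <= k)%nat -> 0 < d < 1 ->
     c1 * (sqrt (Rmax 0 (ln (c2 / d)) / INR k) + ln (c2 / d) / INR k)
       <= Vq k d) ->
  (1 <= n)%nat -> (1 <= M)%nat ->
  (forall m, (m + 1 < M)%nat -> (kg m < kg (m + 1))%nat) ->
  (forall m, (m < M)%nat -> (1 <= kg m)%nat /\ (kg m <= n)%nat) ->
  0 < delta < 1 -> delta <= c2 ^ 2 / 4 ->
  Bbias b (kg 0%nat) n delta <= gamma * Vq (kg 0%nat) delta ->
  Bbias b (kg (M - 1)%nat) n delta > gamma * Vq (kg (M - 1)%nat) delta ->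
  1 < beta ->
  (forall m, (m + 1 < M)%nat -> INR (kg (m + 1)%nat) / INR (kg m) <= beta) ->
  INR n / 2 >= / beta *
     (C2const c1 C rho * Rpower gamma (2 / (1 - 2 * rho)) / ln (4 / delta)
        * Rpower (INR n) (- 2 * rho / (1 - 2 * rho)) - 1) ->
  INR (kstar b gamma kg M n delta) >= / beta *
     (C2const c1 C rho * Rpower gamma (2 / (1 - 2 * rho)) / ln (4 / delta)
        * Rpower (INR n) (- 2 * rho / (1 - 2 * rho)) - 1).
Proof.
  intros Hg Hr HC HF HA Ht0 HQ Hb Hc1 Hc2 HV Hn HM Hinc Hrange Hd Hdc H0 HMl Hbeta Hratio Hbig.
  set (X := C2const c1 C rho * Rpower gamma (2 / (1 - 2 * rho)) / ln (4 / delta)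
        * Rpower (INR n) (- 2 * rho / (1 - 2 * rho))).
  fold X in Hbig |- *.
  set (ks := kstar b gamma kg M n delta).
  apply Rnot_lt_ge. intro Hlt.
  assert (Hks0 : 0 <= INR ks) by apply pos_INR.
  assert (Hbi : 0 < / beta < 1).
  { split. apply Rinv_0_lt_compat; lra. rewrite <- Rinv_1. apply Rinv_lt_contravar; lra. }
  assert (HX1 : 0 < X - 1).
  { destruct (Rle_lt_dec (X - 1) 0) as [h|h]; auto. nra. }
  assert (Hlt' : INR ks < X - 1) by nra.
  assert (Hsat : forall j, (j < M)%nat -> INR (kg j) + 1 <= X ->
            (kg j <= ks)%nat).
  { intros j Hj HjX. apply kstar_ge; auto.
    destruct (Hrange j Hj) as [h1 h2].
    apply (sat_small gamma rho C b c1 c2 n (kg j) delta); auto; lra. }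
  assert (P : forall j, (j < M)%nat -> INR (kg j) + 1 <= X).
  { induction j as [|j IH]; intros Hj.
    - pose proof (kstar_ge b gamma kg M n delta 0%nat Hj H0) as h.
      apply le_INR in h. fold ks in h. lra.
    - assert (Hj' : (j < M)%nat) by lia.
      specialize (IH Hj'). specialize (Hsat j Hj' IH). apply le_INR in Hsat.
      destruct (Hrange j Hj') as [h1 h2]. apply (le_INR 1) in h1. simpl in h1.
      assert (Hq := Hratio j ltac:(lia)). replace (j + 1)%nat with (S j) in Hq by lia.
      assert (INR (kg (S j)) <= beta * INR (kg j)).
      { apply (Rmult_le_reg_r (/ INR (kg j))). apply Rinv_0_lt_compat; lra.
        rewrite Rmult_assoc, Rinv_r by lra. rewrite Rmult_1_r. exact Hq. }
      assert (beta * INR ks < X - 1).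
      { apply (Rmult_lt_reg_l (/ beta)). lra. rewrite <- Rmult_assoc, Rinv_l by lra. lra. }
      nra. }
  assert (HM1 : (M - 1 < M)%nat) by lia.
  specialize (P (M - 1)%nat HM1).
  destruct (Hrange (M - 1)%nat HM1) as [h1 h2].
  assert (Bbias b (kg (M - 1)%nat) n delta <= gamma * Vq (kg (M - 1)%nat) delta).
  { apply (sat_small gamma rho C b c1 c2 n (kg (M - 1)%nat) delta); auto; lra. }
  lra.
Qed.
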